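(* Let $n\ge 1$, $d=2^n$, and let $C=\mathcal{O}(1)$ be a constant. In the minus sign search problem, one is given vectors $x_1,\ldots,x_C\in\mathbb{C}^d$ such that for one unknown index $k^*\in\{1,\ldots,C\}$ we have $x_{k^*}=(-\tfrac{1}{\sqrt d},\tfrac{1}{\sqrt d},\ldots,\tfrac{1}{\sqrt d})$, while $x_i=(\tfrac{1}{\sqrt d},\ldots,\tfrac{1}{\sqrt d})$ for all $i\neq k^*$; the goal is to identify $k^*$. Any quantum algorithm that has access to copies of the $n$-qubit states $|x_1\rangle,\ldots,|x_C\rangle$ (where $|x\rangle=\sum_i x_i|i\rangle$) requires $\Omega(2^n)$ time to solve the minus sign search problem.
   Context: A quantum algorithm with quantum state inputs may request any number of copies of each state $|x_1\rangle,\ldots,|x_C\rangle$, each copy having unit cost, and may then perform arbitrary quantum operations and measurements; its running time is at least the total number of copies it uses. ''Solving'' the problem means outputting the correct index $k^*$ with probability at least $0.9$, for each possible value of $k^*$. *)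

(* Defs.v *)
From HB Require Import structures.
From mathcomp Require Import all_boot all_order all_algebra all_field.
Set Implicit Arguments. Unset Strict Implicit. Unset Printing Implicit Defensive.
Import Order.TTheory GRing.Theory Num.Theory.
Local Open Scope ring_scope.

Definition mss_vec (n C : nat) (kstar i : 'I_C) (b : 'I_(2 ^ n)) : algC :=
  (if (i == kstar) && (val b == 0)%N then -1 else 1) / sqrtC (2 ^ n)%:R.

(* Computational basis of T copies of n-qubit registers. *)
Notation mss_basis n T := {ffun 'I_T -> 'I_(2 ^ n)}.

(* Joint input state: copy j (j < T) is a copy of |x_{f j}>; the joint state is
   the tensor product  (x) _j |x_{f j}>, written in coordinates. *)
Definition mss_state (n C T : nat) (f : 'I_T -> 'I_C) (kstar : 'I_C)
  (a : mss_basis n T) : algC :=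
  \prod_(j < T) @mss_vec n C kstar (f j) (a j).

Definition is_povm (I J : finType) (E : J -> I -> I -> algC) : Prop :=
  (forall j (v : I -> algC),
      0 <= \sum_(a : I) \sum_(b : I) (v a)^* * E j a b * v b) /\
  (forall a b : I, \sum_(j : J) E j a b = (a == b)%:R).

Definition outcome_prob (I J : finType) (E : J -> I -> I -> algC)
  (psi : I -> algC) (j : J) : algC :=
  \sum_(a : I) \sum_(b : I) (psi a)^* * E j a b * psi b.

(* Main.v *)
Require Import Defs.
From HB Require Import structures.
From mathcomp Require Import all_boot all_order all_algebra all_field.
From mathcomp Require Import ring lra.
Import Order.TTheory GRing.Theory Num.Theory.
Set Implicit Arguments. Unset Strict Implicit.
Local Open Scope ring_scope.

Definition Qf (I : finType) (M : I -> I -> algC) (x y : I -> algC) : algC :=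
  \sum_a \sum_b x a * M a b * y b.
Definition Nf (I : finType) (x y : I -> algC) : algC := \sum_a x a * y a.
Definition lin (I : finType) (al be : algC) (x y : I -> algC) : I -> algC :=
  fun a => al * x a + be * y a.

Lemma Q_expand (I : finType) M (x y : I -> algC) al be :
  Qf M (lin al be x y) (lin al be x y) =
  al ^+ 2 * Qf M x x + al * be * (Qf M x y + Qf M y x) + be ^+ 2 * Qf M y y.
Proof.
rewrite /Qf /lin.
have -> : \sum_a \sum_b (al * x a + be * y a) * M a b * (al * x b + be * y b)
   = \sum_a \sum_b (al ^+ 2 * (x a * M a b * x b) + al * be * (x a * M a b * y b)
        + al * be * (y a * M a b * x b) + be ^+ 2 * (y a * M a b * y b)).
  by apply: eq_bigr => a _; apply: eq_bigr => b _; ring.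
rewrite mulrDr !mulr_sumr -!big_split /=.
apply: eq_bigr => a _; rewrite !mulr_sumr -!big_split /=.
by apply: eq_bigr => b _; ring.
Qed.

Lemma N_expand (I : finType) (x y : I -> algC) al be :
  Nf (lin al be x y) (lin al be x y) =
  al ^+ 2 * Nf x x + 2 * al * be * Nf x y + be ^+ 2 * Nf y y.
Proof.
rewrite /Nf /lin !mulr_sumr -!big_split /=.
by apply: eq_bigr => a _; ring.
Qed.

Definition realv (I : finType) (x : I -> algC) := forall a, (x a)^* = x a.

Lemma lin_real (I : finType) (x y : I -> algC) al be :
  al^* = al -> be^* = be -> realv x -> realv y -> realv (lin al be x y).
Proof. move=> ha hb hx hy a; rewrite /lin /= rmorphD !rmorphM; congr (_ * _ + _ * _); [exact: ha|exact: hx|exact: hb|exact: hy]. Qed.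

Lemma outcome_Q (I J : finType) (E : J -> I -> I -> algC) psi j :
  realv psi -> outcome_prob E psi j = Qf (E j) psi psi.
Proof.
by move=> h; rewrite /outcome_prob /Qf; apply: eq_bigr => a _; rewrite h.
Qed.

Lemma psd_Q (I J : finType) (E : J -> I -> I -> algC) v j :
  is_povm E -> realv v -> 0 <= Qf (E j) v v.
Proof. by move=> [h _] hv; rewrite -outcome_Q //; apply: h. Qed.

Lemma povm_sum (I J : finType) (E : J -> I -> I -> algC) v :
  is_povm E -> \sum_j Qf (E j) v v = Nf v v.
Proof.
move=> [_ h]; rewrite /Qf /Nf exchange_big /=; apply: eq_bigr => a _.
rewrite exchange_big /= (bigD1 a) //=.
have -> : \sum_(b | b != a) \sum_j v a * E j a b * v b = 0.
  apply: big1 => b hb; rewrite -mulr_suml -mulr_sumr h.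
  by rewrite eq_sym (negbTE hb) mulr0 mul0r.
by rewrite addr0 -mulr_suml -mulr_sumr h eqxx mulr1.
Qed.

Lemma two_le (I J : finType) (E : J -> I -> I -> algC) v k l :
  is_povm E -> realv v -> k != l ->
  Qf (E k) v v + Qf (E l) v v <= Nf v v.
Proof.
move=> hE hv hkl; rewrite -(povm_sum _ hE) (bigD1 k) //= (bigD1 l) /=; last by rewrite eq_sym.
rewrite addrA lerDl; apply: sumr_ge0 => j _; exact: psd_Q.
Qed.

Lemma one_le (I J : finType) (E : J -> I -> I -> algC) v k :
  is_povm E -> realv v -> Qf (E k) v v <= Nf v v.
Proof.
move=> hE hv; rewrite -(povm_sum _ hE) (bigD1 k) //= lerDl.
apply: sumr_ge0 => j _; exact: psd_Q.
Qed.


Lemma dpos n : (0 < 2 ^ n)%N. Proof. by rewrite expn_gt0. Qed.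

Lemma dnz n : ((2 ^ n)%:R : algC) != 0.
Proof. by rewrite pnatr_eq0 -lt0n dpos. Qed.

Lemma sq_nz n : sqrtC ((2 ^ n)%:R : algC) != 0.
Proof. by rewrite sqrtC_eq0 dnz. Qed.

Lemma cM (x y : algC) : (x * y)^* = x^* * y^*. Proof. exact: rmorphM. Qed.
Lemma cD (x y : algC) : (x + y)^* = x^* + y^*. Proof. exact: rmorphD. Qed.
Lemma cV (x : algC) : (x^-1)^* = (x^*)^-1. Proof. exact: fmorphV. Qed.
Lemma cN1 : ((-1 : algC))^* = -1. Proof. exact: rmorphN1. Qed.
Lemma c1 : ((1 : algC))^* = 1. Proof. exact: rmorph1. Qed.
Lemma cP (I : finType) (F : I -> algC) : (\prod_i F i)^* = \prod_i (F i)^*.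
Proof. exact: rmorph_prod. Qed.

Lemma state_real n C T f k : realv (@mss_state n C T f k).
Proof.
move=> a; rewrite /mss_state cP; apply: eq_bigr => j _.
rewrite /mss_vec cM cV (@geC0_conj _ (sqrtC _)) ?sqrtC_ge0 ?ler0n //.
by case: ifP => _; rewrite ?cN1 ?c1.
Qed.

Lemma vec_prod n C (k l i : 'I_C) (b : 'I_(2 ^ n)) :
  mss_vec k i b * mss_vec l i b =
  (if (val b == 0)%N && ((i == k) != (i == l)) then -1 else 1) / (2 ^ n)%:R.
Proof.
rewrite /mss_vec -{3}(sqrtCK (2 ^ n)%:R).
have := sq_nz n; set r := sqrtC _ => hr.
by case: (i == k); case: (i == l); case: (val b == 0)%N => /=; field.
Qed.

Lemma vec_sum n C (k l i : 'I_C) :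
  \sum_(b : 'I_(2 ^ n)) mss_vec k i b * mss_vec l i b =
  if (i == k) != (i == l) then ((2 ^ n)%:R - 2) / (2 ^ n)%:R else 1.
Proof.
under eq_bigr do rewrite vec_prod.
rewrite -mulr_suml; have hd := dnz n.
case: ifP => hc.
  set b0 : 'I_(2 ^ n) := Ordinal (dpos n).
  rewrite (bigD1 b0) //=.
  rewrite (eq_bigr (fun _ => 1)); last first.
    by move=> b hb; rewrite andbT; case: eqP => // hv; case/eqP: hb; apply: val_inj.
  rewrite sumr_const cardC1 card_ord.
  have -> : (((2 ^ n).-1)%:R : algC) = (2 ^ n)%:R - 1.
    by rewrite -{2}(prednK (dpos n)) -natr1 addrK.
  by congr (_ / _); ring.
rewrite (eq_bigr (fun _ => 1)); last by move=> b _; rewrite andbF.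
by rewrite sumr_const card_ord divff.
Qed.

Lemma inner n C T (f : 'I_T -> 'I_C) (k l : 'I_C) :
  Nf (@mss_state n C T f k) (@mss_state n C T f l) =
  (((2 ^ n)%:R - 2) / (2 ^ n)%:R) ^+ #|[pred j | (f j == k) != (f j == l)]|.
Proof.
rewrite /Nf /mss_state.
under eq_bigr do rewrite -big_split /=.
rewrite -(bigA_distr_bigA (fun j b => mss_vec k (f j) b * mss_vec l (f j) b)) /=.
under eq_bigr do rewrite vec_sum.
by rewrite -big_mkcond prodr_const.
Qed.


Lemma bern (x : rat) m : 0 <= x <= 1 -> 1 - m%:R * x <= (1 - x) ^+ m.
Proof.
move=> /andP [h0 h1]; elim: m => [|m IH]; first by rewrite mul0r subr0 expr0.
rewrite exprSr; apply: le_trans (_ : (1 - m%:R * x) * (1 - x) <= _).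
  rewrite -natr1; have : 0 <= m%:R * x * x by rewrite mulr_ge0 ?mulr_ge0 ?ler0n.
  nra.
by apply: ler_wpM2r => //; rewrite subr_ge0.
Qed.

Unset Implicit Arguments.

Theorem proposition2 (C : nat) (hC : (2 <= C)%N) :
  exists c : rat, 0 < c /\
  forall (n : nat), (1 <= n)%N ->
  forall (T : nat) (f : 'I_T -> 'I_C)
         (E : 'I_C -> mss_basis n T -> mss_basis n T -> algC),
    is_povm E ->
    (forall kstar : 'I_C,
        9%:R / 10%:R <= outcome_prob E (@mss_state n C T f kstar) kstar) ->
    c * (2 ^ n)%:R <= T%:R.
Proof.
exists (7 / 80); split; first by rewrite divr_gt0.
move=> n hn T f E hE hsucc.
have hC0 : (0 < C)%N by apply: leq_trans hC.
pose k0 : 'I_C := Ordinal hC0. pose k1 : 'I_C := Ordinal hC.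
have hk : k0 != k1 by [].
pose a := @mss_state n C T f k0. pose b := @mss_state n C T f k1.
have ra : realv a := state_real f k0.
have rb : realv b := state_real f k1.
pose M := #|[pred j | (f j == k0) != (f j == k1)]|.
pose rho : algC := ((2 ^ n)%:R - 2) / (2 ^ n)%:R.
have Naa : Nf a a = 1.
  rewrite /a inner (_ : #|_| = 0%N) ?expr0 //.
  apply: eq_card0 => j. by rewrite !inE /= eqxx.
have Nbb : Nf b b = 1.
  rewrite /b inner (_ : #|_| = 0%N) ?expr0 //.
  apply: eq_card0 => j. by rewrite !inE /= eqxx.
have Nab : Nf a b = rho ^+ M by rewrite /a /b inner.
have Nba : Nf b a = Nf a b by rewrite /Nf; apply: eq_bigr => i _; rewrite mulrC.
have h0 := hsucc k0; rewrite (outcome_Q _ _ ra) in h0.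
have h1 := hsucc k1; rewrite (outcome_Q _ _ rb) in h1.
have h2 := two_le hE rb hk.
have h3 := psd_Q k0 hE (lin_real (al:=-1) (be:=2) cN1 (rmorph_nat _ 2) ra rb).
have h4 := one_le k0 hE (lin_real (al:=1) (be:=-1) c1 cN1 ra rb).
rewrite Q_expand in h3. rewrite Q_expand N_expand in h4.
rewrite Naa Nbb Nab in h2 h4.
set Qaa := Qf (E k0) a a in h0 h3 h4.
set Qbb := Qf (E k0) b b in h2 h3 h4.
set Qll := Qf (E k1) b b in h1 h2.
set P := Qf (E k0) a b + Qf (E k0) b a in h3 h4.
set s := rho ^+ M in h4 *.
have key : (7 / 20 : algC) <= 2 - 2 * s.
  rewrite -subr_ge0.
  have -> : 2 - 2 * s - 7 / 20 =
     ((1 ^+ 2 * 1 + 2 * 1 * -1 * s + (-1) ^+ 2 * 1) - (1 ^+ 2 * Qaa + 1 * -1 * P + (-1) ^+ 2 * Qbb))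
     + ((-1) ^+ 2 * Qaa + -1 * 2 * P + 2 ^+ 2 * Qbb) / 2
     + (Qaa - 9 / 10) / 2 + (1 - (Qbb + Qll)) + (Qll - 9 / 10) by field.
  have t1 := h4; rewrite -subr_ge0 in t1.
  have t2 : 0 <= ((-1) ^+ 2 * Qaa + -1 * 2 * P + 2 ^+ 2 * Qbb) / 2 by rewrite divr_ge0 ?ler0n.
  have t3 : 0 <= (Qaa - 9 / 10) / 2 by rewrite divr_ge0 ?ler0n ?subr_ge0.
  have t4 : 0 <= 1 - (Qbb + Qll) by rewrite subr_ge0.
  have t5 : 0 <= Qll - 9 / 10 by rewrite subr_ge0.
  apply: addr_ge0 t5; apply: addr_ge0 t4; apply: addr_ge0 t3; exact: addr_ge0 t1 t2.
pose D : rat := (2 ^ n)%:R.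
pose x : rat := 2 / D.
have hD2 : (2 <= 2 ^ n)%N by rewrite -{1}(expn1 2) leq_pexp2l.
have hD : 2 <= D by rewrite /D (ler_nat _ 2).
have hD0 : 0 < D by rewrite /D ltr0n expn_gt0.
have hDnz : D != 0 by rewrite gt_eqF.
have hxD : x * D = 2 by rewrite /x mulfVK.
have hx0 : 0 <= x by rewrite /x divr_ge0 ?ler0n.
have hx1 : x <= 1 by rewrite /x ler_pdivrMr // mul1r.
have e : ratr (2 - 2 * (1 - x) ^+ M) = 2 - 2 * s :> algC.
  rewrite /s /rho rmorphB rmorphM rmorphXn rmorphB /x fmorph_div /D !rmorph_nat rmorph1.
  congr (_ - _ * _ ^+ _); field; exact: dnz.
have e2 : ratr (7 / 20) = 7 / 20 :> algC by rewrite fmorph_div !rmorph_nat.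
rewrite -e -e2 ler_rat in key.
have hb := bern M (x:=x) (introT andP (conj hx0 hx1)).
have hMT : (M <= T)%N by rewrite /M -[X in (_ <= X)%N](card_ord T) max_card.
have hMTr : (M%:R : rat) <= T%:R by rewrite ler_nat.
have hMx : M%:R * x * D = 2 * M%:R :> rat by rewrite -mulrA hxD mulrC.
have hp : 0 <= (2 * M%:R * x - 7 / 20) * D.
  apply: mulr_ge0; last lra.
  rewrite subr_ge0; lra.
rewrite -/D; nra.
Qed.
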